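(* Let $m \geq 2$ be an integer and $n = m^2$. For $k = 0,1,\ldots,m-1$ let $u_k = e^{i 2 k \pi/m}$. For $\mathbf{t} = (t_0,t_1,\ldots,t_{m-2}) \in (\mathbb{C}\setminus\{0\})^{m-1}$ define the point $\mathbf{x}(\mathbf{t}) = (x_0,\ldots,x_{n-1}) \in \mathbb{C}^n$ by \[ x_{km+j} = u_k\, t_0 t_1 \cdots t_j \quad (j = 0,1,\ldots,m-2), \qquad x_{km+m-1} = u_k\, t_0^{-m+1} t_1^{-m+2} \cdots t_{m-3}^{-2} t_{m-2}^{-1}, \] for $k = 0,1,\ldots,m-1$ (so the exponent of $t_j$ in $x_{km+m-1}$ is $-(m-1-j)$). Let $S \subseteq \mathbb{C}^n$ be the Zariski closure of $\{\mathbf{x}(\mathbf{t}) : \mathbf{t} \in (\mathbb{C}\setminus\{0\})^{m-1}\}$, an $(m-1)$-dimensional algebraic set. Then the degree of $S$ equals $m$.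
   Context: The degree of an algebraic set $S \subseteq \mathbb{C}^n$ of dimension $d$ is the number of points in the intersection of $S$ with $d$ hyperplanes with generic (random) complex coefficients. *)

(* Defs.v *)
From HB Require Import structures.
From mathcomp Require Import all_boot all_order all_algebra.
From mathcomp Require Import classical_sets reals trigo.
From mathcomp Require Import complex.
From mathcomp Require Import mpoly.
Set Implicit Arguments. Unset Strict Implicit. Unset Printing Implicit Defensive.
Import Order.TTheory GRing.Theory Num.Theory.
Local Open Scope ring_scope.

Definition zariski_closure (C : comNzRingType) (n : nat) (X : set 'rV[C]_n)
  : set 'rV[C]_n :=
  [set y | forall p : {mpoly C[n]},
     (forall x, X x -> meval (fun i => x 0 i) p = 0) ->
     meval (fun i => y 0 i) p = 0].

Definition hyperplane (C : comNzRingType) (n : nat) (c : 'rV[C]_n.+1)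
  : set 'rV[C]_n :=
  [set x | \sum_(i < n) c 0 (widen_ord (leqnSn n) i) * x 0 i + c 0 ord_max = 0].

Definition has_exactly (C : comNzRingType) (n : nat) (A : set 'rV[C]_n) (k : nat)
  : Prop :=
  exists s : seq 'rV[C]_n, [/\ uniq s, size s = k & forall x, A x <-> x \in s].

(* Degree of an algebraic set S of dimension d: for d hyperplanes with generic
   coefficients (the rows of M : 'M_(d, n+1)), S meets their intersection in
   exactly k points.  "Generic" = outside the zero set of some nonzero
   polynomial in the d*(n+1) coefficients. *)
Definition degree_is (C : comNzRingType) (n : nat) (S : set 'rV[C]_n) (d k : nat)
  : Prop :=
  exists P : {mpoly C[d * n.+1]}, P != 0 /\
    forall M : 'M[C]_(d, n.+1),
      meval (fun l => mxvec M 0 l) P != 0 ->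
      has_exactly (S `&` [set x | forall j : 'I_d, hyperplane (row j M) x]) k.

Definition root_u (R : realType) (m k : nat) : R[i] :=
  let a : R := (2 * pi * k%:R / m%:R) in Complex (cos a) (sin a).

Definition xpt (R : realType) (m : nat) (t : 'I_(m.-1) -> R[i]) : 'rV[R[i]]_(m * m) :=
  \row_(i < m * m)
    let k := (i %/ m)%N in let j := (i %% m)%N in
    if (j < m.-1)%N then root_u R m k * \prod_(l < m.-1 | (l <= j)%N) t l
    else root_u R m k * \prod_(l < m.-1) (t l) ^- (m.-1 - l)%N.

Definition S_m (R : realType) (m : nat) : set 'rV[R[i]]_(m * m) :=
  zariski_closure [set y | exists t : 'I_(m.-1) -> R[i],
                              (forall l, t l != 0) /\ y = xpt t].

(* Submission.v *)
Require Import Defs.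
From HB Require Import structures.
From mathcomp Require Import all_boot all_order all_algebra all_field.
From mathcomp Require Import classical_sets reals trigo.
From mathcomp Require Import complex.
From mathcomp Require Import mpoly.
From mathcomp Require Import zify ring lra.
From mathcomp Require Import boolp.
Set Implicit Arguments. Unset Strict Implicit. Unset Printing Implicit Defensive.
Import Order.TTheory GRing.Theory Num.Theory.
Local Open Scope ring_scope.

Section Generic.
Variables (T : comNzRingType) (d : nat) (uu : nat -> T).
Local Notation m := d.+1.
Local Notation n := (d.+1 * d.+1)%N.
Definition modo (i : nat) : 'I_m := Ordinal (ltn_pmod i (ltn0Sn d)).
Definition aM (M : 'M[T]_(d, n.+1)) : 'M[T]_(d, m) :=
  \matrix_(i, j) \sum_(i' < n | modo i' == j) M i (widen_ord (leqnSn n) i') * uu (i' %/ m).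
Definition bM (M : 'M[T]_(d, n.+1)) : 'cV[T]_d := \col_i M i ord_max.
Definition Ap M : 'M[T]_d := \matrix_(i, j) aM M i (lift ord0 j).
Definition c0 M : 'cV[T]_d := \col_i aM M i ord0.
Definition dl M := \det (Ap M).
Definition al M : 'cV[T]_d := - (\adj (Ap M) *m c0 M).
Definition be M : 'cV[T]_d := - (\adj (Ap M) *m bM M).
Definition cc M := \prod_(j < d) al M j 0.
Definition P1 M : {poly T} := \prod_(j < d) (al M j 0 *: 'X + (be M j 0)%:P).
Definition GG M : {poly T} := 'X * P1 M - (dl M ^+ d)%:P.
Definition DD M := dl M * cc M * resultant (GG M) (GG M)^`().

Lemma size_prod_le2 (I : Type) (s : seq I) (F : I -> {poly T}) :
  (forall i, size (F i) <= 2)%N -> (size (\prod_(i <- s) F i)%R <= (size s).+1)%N.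
Proof.
move=> hF; elim: s => [|j s IH]; first by rewrite big_nil size_poly1.
rewrite big_cons /=; apply: (leq_trans (size_mul_leq _ _)).
by move: (hF j) IH; case: (size (F j)) => [|[|[|]]] //=; case: (size _) => [|k] //=; lia.
Qed.

Lemma size_P1 M : (size (P1 M) <= d.+1)%N.
Proof.
rewrite /P1 -[X in (_ <= X.+1)%N](size_enum_ord d) -big_enum /=.
apply: size_prod_le2 => j.
apply: (leq_trans (size_add _ _)); rewrite geq_max.
rewrite (leq_trans (size_scale_leq _ _)) ?size_polyX //.
by rewrite (leq_trans (size_polyC_leq1 _)).
Qed.

Lemma size_GG M : (size (GG M) <= d.+2)%N.
Proof.
rewrite /GG; apply: (leq_trans (size_add _ _)); rewrite geq_max size_opp.
rewrite (leq_trans (size_polyC_leq1 _)) // andbT.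
apply: (leq_trans (size_mul_leq _ _)); rewrite size_polyX.
by have := size_P1 M; case: (size _).
Qed.
End Generic.

Section Map.
Variables (A B : comNzRingType) (f : {rmorphism A -> B}).

Lemma map_resultant' (p q : {poly A}) :
    f (lead_coef p) != 0 -> f (lead_coef q) != 0 ->
  f (resultant p q)= resultant (map_poly f p) (map_poly f q).
Proof.
move=> nz_fp nz_fq; rewrite /resultant /Sylvester_mx !size_map_poly_id0 //.
rewrite -det_map_mx /= map_col_mx; congr (\det (col_mx _ _));
  by apply: map_lin1_mx => v; rewrite map_poly_rV rmorphM /= map_rVpoly.
Qed.

Variables (d : nat) (uA : nat -> A) (uB : nat -> B).
Hypothesis huB : forall k, uB k = f (uA k).
Local Notation n := (d.+1 * d.+1)%N.
Variable M : 'M[A]_(d, n.+1).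
Local Notation fM := (map_mx f M).

Lemma aM_map : aM uB fM = map_mx f (aM uA M).
Proof.
by apply/matrixP=> i j; rewrite !mxE rmorph_sum; apply: eq_bigr => k _; rewrite rmorphM huB mxE.
Qed.

Lemma bM_map : bM fM = map_mx f (bM M).
Proof. by apply/matrixP=> i j; rewrite !mxE. Qed.

Lemma Ap_map : Ap uB fM = map_mx f (Ap uA M).
Proof. by apply/matrixP=> i j; rewrite mxE aM_map !mxE. Qed.

Lemma c0_map : c0 uB fM = map_mx f (c0 uA M).
Proof. by apply/matrixP=> i j; rewrite mxE aM_map !mxE. Qed.

Lemma dl_map : dl uB fM = f (dl uA M).
Proof. by rewrite /dl Ap_map det_map_mx. Qed.

Lemma al_map : al uB fM = map_mx f (al uA M).
Proof. by rewrite /al map_mxN map_mxM map_mx_adj Ap_map c0_map. Qed.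

Lemma be_map : be uB fM = map_mx f (be uA M).
Proof. by rewrite /be map_mxN map_mxM map_mx_adj Ap_map bM_map. Qed.

Lemma cc_map : cc uB fM = f (cc uA M).
Proof. by rewrite /cc rmorph_prod; apply: eq_bigr => j _; rewrite al_map mxE. Qed.

Lemma GG_map : GG uB fM = map_poly f (GG uA M).
Proof.
rewrite /GG /P1 rmorphB rmorphM /= map_polyX rmorph_prod /= map_polyC /= rmorphXn dl_map.
congr (_ * _ - _); last by rewrite rmorphXn polyC_exp.
apply: eq_bigr => j _.
by rewrite rmorphD /= map_polyZ map_polyX map_polyC /= al_map be_map !mxE.
Qed.
End Map.
Section Field.
Variables (K : numClosedFieldType) (d : nat) (uu : nat -> K).
Hypothesis uu0 : uu 0%N = 1.
Local Notation m := d.+1.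
Local Notation n := (d.+1 * d.+1)%N.
Variable M : 'M[K]_(d, n.+1).
Local Notation dl := (dl uu M).
Local Notation al := (al uu M).
Local Notation be := (be uu M).
Local Notation cc := (cc uu M).
Local Notation GG := (GG uu M).
Local Notation P1 := (P1 uu M).

Lemma GG_size_lead : cc != 0 -> size GG = d.+2 /\ lead_coef GG = cc.
Proof.
move=> ccn0.
have aln0 j : al j 0 != 0.
  by apply: contraNneq ccn0 => h; rewrite /cc (bigD1 j) //= h mul0r.
have Fn0 j : al j 0 *: 'X + (be j 0)%:P != 0.
  by rewrite -size_poly_eq0 size_addl ?size_scale ?size_polyX // size_polyC; case: eqP.
have Fs j : size (al j 0 *: 'X + (be j 0)%:P) = 2.
  by rewrite size_addl ?size_scale ?size_polyX // size_polyC; case: eqP.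
have Fl j : lead_coef (al j 0 *: 'X + (be j 0)%:P) = al j 0.
  by rewrite lead_coefDl ?size_scale ?size_polyX ?lead_coefZ ?lead_coefX ?mulr1 // size_polyC; case: eqP.
have sP1 : size P1 = d.+1.
  rewrite /P1 size_prod; last by move=> j _; exact: Fn0.
  rewrite (eq_bigr (fun _ => 2%N)) ?sum_nat_const; last by move=> j _; rewrite Fs.
  by rewrite cardT size_enum_ord; lia.
have lP1 : lead_coef P1 = cc by rewrite /P1 lead_coef_prod; apply: eq_bigr => j _; rewrite Fl.
have P1n0 : P1 != 0 by rewrite -size_poly_eq0 sP1.
have sXP : size ('X * P1) = d.+2 by rewrite mulrC size_mulX // sP1.
rewrite /GG; split.
  by rewrite size_addl // size_opp sXP (leq_ltn_trans (size_polyC_leq1 _)).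
rewrite lead_coefDl; first by rewrite mulrC lead_coefMX.
by rewrite size_opp sXP (leq_ltn_trans (size_polyC_leq1 _)).
Qed.

Definition emb (y : 'I_m -> K) : 'rV[K]_n := \row_(i < n) (uu (i %/ m)%N * y (modo d i)).

Lemma hyp_emb i y : hyperplane (row i M) (emb y) <->
  \sum_j aM uu M i j * y j + bM M i 0 = 0.
Proof.
rewrite /hyperplane /=.
have -> : \sum_(i0 < n) row i M 0 (widen_ord (leqnSn n) i0) * emb y 0 i0 =
          \sum_j aM uu M i j * y j.
  rewrite (partition_big (fun i' : 'I_n => modo d i') xpredT) //=.
  apply: eq_bigr => j _; rewrite mxE mulr_suml; apply: eq_bigr => k /eqP hk.
  by rewrite !mxE hk mulrA.
by rewrite !mxE.
Qed.

Definition ycol (y : 'I_m -> K) : 'cV[K]_d := \col_j y (lift ord0 j).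

Lemma lin_equiv y : (forall i, \sum_j aM uu M i j * y j + bM M i 0 = 0) <->
  Ap uu M *m ycol y = - (y ord0 *: c0 uu M + bM M).
Proof.
have E i : \sum_j aM uu M i j * y j + bM M i 0 =
   (Ap uu M *m ycol y) i 0 + (y ord0 *: c0 uu M + bM M) i 0.
  rewrite /Ap /c0; set a := aM uu M; clearbody a.
  rewrite big_ord_recl !mxE; under [in RHS]eq_bigr do rewrite !mxE.
  by rewrite (mulrC (y _)) addrA; congr (_ + _); rewrite addrC.
split=> [h|h i].
  apply/matrixP => i k; rewrite (ord1 k).
  have := E i; rewrite h => /esym/eqP; rewrite addr_eq0 => /eqP ->.
  by rewrite [in RHS]mxE.
by rewrite E h mxE addNr.
Qed.

Lemma lin_solve : dl != 0 -> forall z (v : 'cV[K]_d),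
  Ap uu M *m v = - (z *: c0 uu M + bM M) <-> dl *: v = z *: al + be.
Proof.
move=> hdl z v; have hz : z *: al + be = \adj (Ap uu M) *m (- (z *: c0 uu M + bM M)).
  by rewrite /Submission.al /Submission.be mulmxN mulmxDr -scalemxAr; rewrite opprD scalerN.
split=> h.
  by rewrite hz -h mulmxA mul_adj_mx mul_scalar_mx.
apply: (scalerI hdl); rewrite scalemxAr h hz mulmxA mul_mx_adj mul_scalar_mx.
by [].
Qed.

Definition ysol z : 'I_m -> K := fun j =>
  if unlift ord0 j is Some k then dl^-1 * (z * al k 0 + be k 0) else z.

Lemma ysol0 z : ysol z ord0 = z.
Proof. by rewrite /ysol unlift_none. Qed.

Lemma ysolS z k : ysol z (lift ord0 k) = dl^-1 * (z * al k 0 + be k 0).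
Proof. by rewrite /ysol liftK. Qed.

Lemma prod_ysol z : dl != 0 -> \prod_j ysol z j = dl^-1 ^+ d * (GG.[z] + dl ^+ d).
Proof.
move=> hdl; rewrite big_ord_recl ysol0.
under eq_bigr do rewrite ysolS.
rewrite big_split /= prodr_const card_ord /GG /P1 !hornerE horner_prod.
rewrite addrNK.
have -> : \prod_i (al i 0 *: 'X + (be i 0)%:P).[z] = \prod_(i<d) (z * al i 0 + be i 0).
  by apply: eq_bigr => j _; rewrite !hornerE mulrC.
by rewrite /= mulrCA mulrA.
Qed.

Lemma ysol_lin z : dl != 0 -> Ap uu M *m ycol (ysol z) = - (z *: c0 uu M + bM M).
Proof.
move=> hdl; apply/(lin_solve hdl); apply/matrixP => k l; rewrite (ord1 l).
rewrite !mxE ysolS mulVKf //; by rewrite /Submission.al /Submission.be !mxE.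
Qed.

Lemma lin_ysol y : dl != 0 -> Ap uu M *m ycol y = - (y ord0 *: c0 uu M + bM M) ->
  forall j, y j = ysol (y ord0) j.
Proof.
move=> hdl /(lin_solve hdl) /matrixP h j; case: (unliftP ord0 j) => [k ->|->].
  by rewrite ysolS; have := h k 0; rewrite !mxE => <-; rewrite mulKf // mulrC.
by rewrite ysol0.
Qed.

Definition wid (j : 'I_m) : 'I_n := widen_ord (leq_pmulr m (ltn0Sn d)) j.

Lemma emb_wid y j : emb y 0 (wid j) = y j.
Proof.
rewrite mxE /= divn_small ?ltn_ord // uu0 mul1r; congr (y _).
by apply: val_inj; rewrite /= modn_small.
Qed.

Lemma emb_eq y y' : (forall j, y j = y' j) -> emb y = emb y'.
Proof. by move=> h; apply/matrixP => i j; rewrite !mxE h. Qed.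

Local Open Scope classical_set_scope.

Definition Tset : set 'rV[K]_n := [set x | exists y, \prod_j y j = 1 /\ x = emb y].

Lemma count_pts : dl != 0 -> cc != 0 -> resultant GG GG^`() != 0 ->
  has_exactly (Tset `&` [set x | forall j : 'I_d, hyperplane (row j M) x]) m.
Proof.
move=> hdl hcc hres.
have [sG lG] := GG_size_lead hcc.
have [r Hr] := closed_field_poly_normal GG.
rewrite lG in Hr.
have Gn0 : GG != 0 by rewrite -size_poly_eq0 sG.
have sr : size r = m.
  by move: sG; rewrite Hr size_scale // size_prod_XsubC => -[].
have rootG z : root GG z = (z \in r) by rewrite Hr rootZ // root_prod_XsubC.
have ur : uniq r.
  have cop : coprimep GG GG^`().
    rewrite /coprimep; move: hres; rewrite resultant_eq0 -leqNgt.
    have : gcdp GG GG^`() != 0 by rewrite gcdp_eq0 negb_and Gn0.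
    by rewrite -size_poly_eq0; case: (size _) => [|[|]].
  have sep : separable_poly GG by rewrite unlock.
  move: sep.
  by rewrite Hr (eqp_separable (eqp_scale _ hcc)) separable_prod_XsubC.
exists [seq emb (ysol z) | z <- r]; split.
- rewrite map_inj_in_uniq // => z1 z2 _ _ h.
  by have := congr1 (fun x : 'rV[K]_n => x 0 (wid ord0)) h; rewrite /= !emb_wid !ysol0.
- by rewrite size_map.
move=> x; split.
  move=> [[y [hy ->]] hh].
  have hl : Ap uu M *m ycol y = - (y ord0 *: c0 uu M + bM M).
    by apply/lin_equiv => i; apply/hyp_emb/hh.
  have ey := lin_ysol hdl hl.
  rewrite (emb_eq ey); apply: map_f; rewrite -rootG; apply/eqP.
  have : \prod_j ysol (y ord0) j = 1.
    by rewrite -[RHS]hy; apply: eq_bigr => j _; rewrite -ey.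
  rewrite prod_ysol // => /(congr1 (fun t => dl ^+ d * t)).
  rewrite mulrA -exprMn mulfV // expr1n mul1r mulr1 => /eqP.
  by rewrite -subr_eq0 addrK => /eqP.
move=> /mapP [z zr ->]; split.
  exists (ysol z); split => //.
  rewrite prod_ysol //; move: zr; rewrite -rootG => /eqP ->.
  by rewrite add0r -exprMn mulVf // expr1n.
move=> j; apply/hyp_emb; move: j; apply/lin_equiv.
by rewrite ysol0; apply: ysol_lin.
Qed.

End Field.

Section Witness.
Variables (K : numClosedFieldType) (d : nat) (uu : nat -> K).
Hypothesis uu0 : uu 0%N = 1.
Local Notation m := d.+1.
Local Notation n := (d.+1 * d.+1)%N.

Lemma aM_small (M : 'M[K]_(d, n.+1)) :
  (forall i (i' : 'I_n), (m <= i')%N -> M i (widen_ord (leqnSn n) i') = 0) ->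
  forall i j, aM uu M i j = M i (widen_ord (leqnSn n) (wid j)).
Proof.
move=> hM i j; rewrite mxE (bigD1 (wid j)) /=; last first.
  by apply/eqP/val_inj; rewrite /= modn_small.
rewrite divn_small ?ltn_ord // uu0 mulr1 big1 ?addr0 // => i' /andP [/eqP hmod hne].
case: (ltnP i' m) => hi; last by rewrite hM // mul0r.
move: hne; suff -> : i' = wid j by rewrite eqxx.
by apply: val_inj; rewrite /= -hmod /= modn_small.
Qed.

Definition M0 : 'M[K]_(d, n.+1) := \matrix_(i < d, j < n.+1)
  if (j < m)%N then (if (j == 0 :> nat)%N then -1 else if (j == i.+1 :> nat)%N then 1 else 0) else 0.

Lemma M0_small i (i' : 'I_n) : (m <= i')%N -> M0 i (widen_ord (leqnSn n) i') = 0.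
Proof. by move=> h; rewrite mxE /= ltnNge h. Qed.

Lemma Ap_M0 : Ap uu M0 = 1%:M.
Proof.
apply/matrixP => i j; rewrite [LHS]mxE aM_small; last exact: M0_small.
rewrite !mxE /= /bump leq0n add1n ltnS ltn_ord eqSS eq_sym.
by case: ifP => /eqP h; [rewrite (val_inj h) eqxx | case: eqP => // h'; rewrite h' in h].

Qed.

Lemma c0_M0 : c0 uu M0 = const_mx (-1).
Proof. by apply/matrixP => i j; rewrite [LHS]mxE aM_small ?mxE //; exact: M0_small. Qed.

Lemma bM_M0 : bM M0 = 0.
Proof.
apply/matrixP => i j; rewrite !mxE /= ltnNge.
have -> : (m <= n)%N by rewrite leq_pmulr.
by [].
Qed.

Lemma GG_M0 : GG uu M0 = 'X^m - 1.
Proof.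
rewrite /GG /P1 /dl Ap_M0 det1 expr1n.
have -> : \prod_(j < d) (al uu M0 j 0 *: 'X + (be uu M0 j 0)%:P) = \prod_(j < d) 'X.
  apply: eq_bigr => j _; rewrite /al /be Ap_M0 adj1 !mul1mx c0_M0 bM_M0 !mxE.
  by rewrite oppr0 addr0 opprK scale1r.
by rewrite prodr_const card_ord exprS.
Qed.

Lemma cc_M0 : cc uu M0 = 1.
Proof.
rewrite /cc big1 // => j _; rewrite /al Ap_M0 adj1 mul1mx c0_M0 !mxE.
by rewrite opprK.
Qed.

Lemma DD_M0 : DD uu M0 != 0.
Proof.
rewrite /DD /dl Ap_M0 det1 cc_M0 !mul1r GG_M0 resultant_eq0 -leqNgt.
have : separable_poly ('X^m - 1 : {poly K}) by apply: separable_Xn_sub_1; rewrite pnatr_eq0.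
rewrite unlock /coprimep => /eqP ->; done.
Qed.

End Witness.

Lemma lead_map_helper (A B : comNzRingType) (f : {rmorphism A -> B}) (p : {poly A}) k :
  (size p <= k)%N -> size (map_poly f p) = k -> f (lead_coef p) = lead_coef (map_poly f p).
Proof.
move=> hp hm; case: k hp hm => [|k] hp hm.
  by move: hp; rewrite leqn0 size_poly_eq0 => /eqP ->; rewrite !(lead_coef0, rmorph0).
have hc : (map_poly f p)`_k != 0.
  have : lead_coef (map_poly f p) != 0 by rewrite lead_coef_eq0 -size_poly_eq0 hm.
  by rewrite /lead_coef hm.
have sp : size p = k.+1.
  apply/eqP; rewrite eqn_leq hp /=; apply: contraR hc; rewrite -ltnNge ltnS => h.
  by rewrite coef_map /= (nth_default _ h); apply/eqP; exact: rmorph0.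
by rewrite /lead_coef hm sp coef_map.
Qed.

Section Generic2.
Variables (R : realType) (d : nat).
Local Notation C := (R[i] : numClosedFieldType).
Local Notation n := (d.+1 * d.+1)%N.
Local Notation N := (d * n.+1)%N.
Local Notation u := (root_u R d.+1).

Lemma u0 : u 0%N = 1.
Proof. by rewrite /root_u mulr0 mul0r cos0 sin0. Qed.

Definition Mgen : 'M[{mpoly C[N]}]_(d, n.+1) := \matrix_(i, j) 'X_(mxvec_index i j).
Definition uG k : {mpoly C[N]} := (u k)%:MP.
Definition Pgen := DD uG Mgen.

Section Ev.
Variable M : 'M[C]_(d, n.+1).
Local Notation f := (meval (fun l => mxvec M 0 l)).

Lemma map_Mgen : map_mx f Mgen = M.
Proof. by apply/matrixP => i j; rewrite !mxE mevalXU mxvecE. Qed.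

Lemma huG k : u k = f (uG k).
Proof. by rewrite mevalC. Qed.

Lemma key : cc u M != 0 -> f Pgen = DD u M.
Proof.
move=> hcc.
have [sG lG] := GG_size_lead hcc.
have eG : map_poly f (GG uG Mgen) = GG u M by rewrite -(GG_map huG) map_Mgen.
rewrite /Pgen /DD !rmorphM /= -!(dl_map huG) -!(cc_map huG) map_Mgen.
congr (_ * _).
have sD : size (GG u M)^`() = d.+1.
  have Gn0 : GG u M != 0 by rewrite -size_poly_eq0 sG.
  have hc : (GG u M)^`()`_d != 0.
    have hl : (GG u M)`_d.+1 = cc u M by rewrite -lG /lead_coef sG.
    by rewrite coef_deriv hl mulrn_eq0 negb_or hcc.
  apply/eqP; rewrite eqn_leq; apply/andP; split.
    by have := lt_size_deriv Gn0; rewrite sG.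
  rewrite ltnNge; apply/negP => h; move: hc; by rewrite (nth_default _ h) eqxx.
have L1 : f (lead_coef (GG uG Mgen)) = lead_coef (GG u M).
  rewrite -eG; apply: lead_map_helper; first exact: size_GG.
  by rewrite eG.
have L2 : f (lead_coef (GG uG Mgen)^`()) = lead_coef (GG u M)^`().
  rewrite -eG deriv_map; apply: lead_map_helper; last by rewrite -deriv_map eG.
  have := size_GG uG Mgen; case: (GG uG Mgen =P 0) => [->|h]; first by rewrite deriv0 size_poly0.
  by move=> hs; have := leq_trans (lt_size_deriv (introN eqP h)) hs; rewrite sD.
rewrite (map_resultant' (f := f)) -?deriv_map ?eG //.
  have h1 : lead_coef (GG u M) != 0 by rewrite lead_coef_eq0 -size_poly_eq0 sG.
  by move: h1; rewrite -L1.
have h2 : lead_coef (GG u M)^`() != 0 by rewrite lead_coef_eq0 -size_poly_eq0 sD.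
by move: h2; rewrite -L2.
Qed.
End Ev.
End Generic2.

Lemma prod_ge (K : comNzRingType) (x : K) (l d : nat) :
  \prod_(0 <= j < d) (if (l <= j)%N then x else 1) = x ^+ (d - l).
Proof.
elim: d => [|d IH]; first by rewrite big_geq.
rewrite big_nat_recr //= IH; case: (leqP l d) => h.
  by rewrite subSn // exprSr.
have h1 : (d - l = 0)%N by apply/eqP; rewrite subn_eq0 ltnW.
have h2 : (d.+1 - l = 0)%N by apply/eqP; rewrite subn_eq0.
by rewrite h1 h2 mulr1.
Qed.

Section PartA.
Variables (R : realType) (d : nat).
Local Notation C := (R[i] : numClosedFieldType).
Local Notation n := (d.+1 * d.+1)%N.
Local Notation u := (root_u R d.+1).

Definition pt (t : 'I_d -> C) : 'I_d.+1 -> C := fun j =>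
  if (j < d)%N then \prod_(l < d | (l <= j)%N) t l else \prod_(l < d) t l ^- (d - l).

Lemma xpt_emb (t : 'I_d -> C) : @xpt R d.+1 t = emb u (pt t).
Proof. by apply/matrixP => a b; rewrite !mxE /= /pt /=; case: ifP. Qed.

Lemma prod_pt t : (forall l, t l != 0) -> \prod_j pt t j = 1.
Proof.
move=> ht; rewrite big_ord_recr /= /pt /= ltnn.
have -> : \prod_(i < d) (if (widen_ord (leqnSn d) i < d)%N then
     \prod_(l < d | (l <= widen_ord (leqnSn d) i)%N) t l else \prod_(l < d) t l ^- (d - l))
   = \prod_(l < d) t l ^+ (d - l).
  transitivity (\prod_(i < d) \prod_(l < d) (if (l <= i)%N then t l else 1)).
    by apply: eq_bigr => i _; rewrite /= ltn_ord -big_mkcond.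
  rewrite exchange_big; apply: eq_bigr => l _.
  by rewrite -(big_mkord xpredT (fun j => if (l <= j)%N then t l else 1)) prod_ge.
rewrite -big_split /=; apply: big1 => l _.
by rewrite mulfV // expf_neq0.
Qed.

Lemma pt_eq (y : 'I_d.+1 -> C) : \prod_j y j = 1 ->
  exists t : 'I_d -> C, (forall l, t l != 0) /\ (forall j, pt t j = y j).
Proof.
move=> hy.
have yn0 j : y j != 0.
  apply/eqP => h; move: hy; rewrite (bigD1 j) //= h mul0r => /eqP.
  by rewrite eq_sym oner_eq0.
pose t (l : 'I_d) := y (inord l) / (if (l == 0 :> nat) then 1 else y (inord l.-1)).
have tn0 l : t l != 0.
  by rewrite /t mulf_neq0 // invr_eq0; case: ifP => _ //; rewrite oner_eq0.
have part : forall j (hj : (j < d)%N), \prod_(l < d | (l <= j)%N) t l = y (inord j).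
  elim=> [|j IH] hj.
    rewrite (big_pred1 (Ordinal hj)) /t /= ?divr1 // => l /=.
    by rewrite leqn0 -val_eqE.
  rewrite (bigD1 (Ordinal hj)) //= (eq_bigl (fun l : 'I_d => (l <= j)%N)).
    by rewrite IH ?(ltnW hj) // /t /= divfK.
  move=> l /=; rewrite -val_eqE /=.
  by case: (ltngtP l j.+1) => h //=; apply/esym/negP => h'; lia.
exists t; split => // j.
have hsmall (k : 'I_d) : pt t (widen_ord (leqnSn d) k) = y (widen_ord (leqnSn d) k).
  rewrite /pt /= ltn_ord part //; congr (y _); apply: val_inj; rewrite /= inordK //.
  by apply: (ltn_trans (ltn_ord k)).
case: (unliftP ord_max j) => [k ->|->].
  have -> : lift ord_max k = widen_ord (leqnSn d) k by apply: val_inj; rewrite /= /bump leqNgt ltn_ord.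
  exact: hsmall.
have : \prod_j pt t j = \prod_j y j by rewrite prod_pt // hy.
rewrite !big_ord_recr /=.
have -> : \prod_(i < d) pt t (widen_ord (leqnSn d) i) = \prod_(i < d) y (widen_ord (leqnSn d) i).
  by apply: eq_bigr => k _; exact: hsmall.
apply: mulfI; rewrite prodf_seq_neq0; apply/allP => k _; exact: yn0.
Qed.

Lemma S_m_eq x : @S_m R d.+1 x <-> Tset u x.
Proof.
split.
  move=> hx.
  have hi (i : 'I_n) : x 0 i = u (i %/ d.+1) * x 0 (wid (modo d i)).
    pose q : {mpoly C[n]} := 'X_i - u (i %/ d.+1) *: 'X_(wid (modo d i)).
    have h : meval (fun i0 => x 0 i0) q = 0.
      apply: hx => x' [t [ht ->]]; rewrite mevalB mevalZ !mevalXU xpt_emb emb_wid ?u0 //.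
      by rewrite mxE subrr.
    by move: h; rewrite /q mevalB mevalZ !mevalXU => /eqP; rewrite subr_eq0 => /eqP.
  have hp : \prod_j x 0 (wid j) = 1.
    pose q : {mpoly C[n]} := \prod_(j < d.+1) 'X_(wid j) - 1.
    have h : meval (fun i0 => x 0 i0) q = 0.
      apply: hx => x' [t [ht ->]]; rewrite mevalB rmorph_prod meval1 /=.
      under eq_bigr do rewrite mevalXU xpt_emb emb_wid ?u0 //.
      by rewrite prod_pt // subrr.
    move: h; rewrite /q mevalB rmorph_prod meval1 /=.
    under eq_bigr do rewrite mevalXU.
    by move=> /eqP; rewrite subr_eq0 => /eqP.
  exists (fun j => x 0 (wid j)); split => //.
  by apply/matrixP => a b; rewrite (ord1 a) hi mxE.
move=> [y [hy ->]] q hq; apply: hq.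
have [t [ht hpt]] := pt_eq hy.
exists t; split => //; rewrite xpt_emb; exact: emb_eq.
Qed.

End PartA.

Lemma main_deg (R : realType) (d : nat) : degree_is (@S_m R d.+1) d d.+1.
Proof.
exists (Pgen R d); split.
  apply/negP => /eqP h.
  have h0 := @DD_M0 (R[i] : numClosedFieldType) d (root_u R d.+1) (u0 R d).
  have hc : cc (root_u R d.+1) (M0 (R[i] : numClosedFieldType) d) != 0.
    by rewrite (cc_M0 d (u0 R d)) oner_eq0.
  move: h0; rewrite -(key hc) h meval0 eqxx //.
move=> M hP.
have hcc : cc (root_u R d.+1) M != 0.
  move: hP; apply: contraNneq => h.
  by rewrite /Pgen /DD !rmorphM /= -(cc_map (@huG R d M)) map_Mgen h mulr0 mul0r.
move: hP; rewrite (key hcc) /DD !mulf_eq0 !negb_or => /andP [/andP [h1 h2] h3].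
have -> : @S_m R d.+1 = Tset (root_u R d.+1).
  by rewrite funeqE => x; rewrite propeqE; exact: S_m_eq.
exact: (count_pts (u0 R d) h1 hcc h3).
Qed.

Theorem proposition3 (R : realType) (m : nat) :
  (2 <= m)%N -> degree_is (@S_m R m) m.-1 m.
Proof. by case: m => [|m] // _; exact: main_deg. Qed.
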